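(* Let $\Lambda$ be any lattice in $\mathbb{E}^3$ whose shortest non-zero lattice vector has length $2$. Then for every integer $n\ge 2$, $$C_{\Lambda}(n) < 6n-\frac{3\sqrt[3]{18\pi}}{\pi}\,n^{2/3} = 6n-3.665\ldots\, n^{2/3}.$$
   Context: A lattice in $\mathbb{E}^3$ is the set of integer linear combinations of three fixed linearly independent vectors. A packing of unit balls is a family of closed unit balls with pairwise disjoint interiors; its contact number is the number of unordered pairs of balls that touch (centers at distance exactly $2$). $C_\Lambda(n)$ denotes the largest contact number among all packings of $n$ unit balls in $\mathbb{E}^3$ all of whose centers are points of $\Lambda$. *)

(* Defs.v *)
From Stdlib Require Import Reals List.
Import ListNotations.
Open Scope R_scope.

Definition pt := (R * R * R)%type.

Definition vadd (u v : pt) : pt :=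
  let '(a1, a2, a3) := u in let '(b1, b2, b3) := v in (a1 + b1, a2 + b2, a3 + b3).
Definition vscale (c : R) (u : pt) : pt :=
  let '(a1, a2, a3) := u in (c * a1, c * a2, c * a3).
Definition vzero : pt := (0, 0, 0).

Definition vnorm (u : pt) : R :=
  let '(a1, a2, a3) := u in sqrt (a1 ^ 2 + a2 ^ 2 + a3 ^ 2).
Definition dist3 (u v : pt) : R := vnorm (vadd u (vscale (-1) v)).

Definition lin_indep3 (b1 b2 b3 : pt) : Prop :=
  forall x y z : R,
    vadd (vadd (vscale x b1) (vscale y b2)) (vscale z b3) = vzero ->
    x = 0 /\ y = 0 /\ z = 0.

Definition in_lattice (b1 b2 b3 : pt) (v : pt) : Prop :=
  exists k1 k2 k3 : Z,
    v = vadd (vadd (vscale (IZR k1) b1) (vscale (IZR k2) b2)) (vscale (IZR k3) b3).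

Definition min_norm_two (b1 b2 b3 : pt) : Prop :=
  (forall v, in_lattice b1 b2 b3 v -> v <> vzero -> 2 <= vnorm v) /\
  (exists v, in_lattice b1 b2 b3 v /\ v <> vzero /\ vnorm v = 2).

(* A packing of unit balls given by the list of its centers: distinct
   centers, closed unit balls with pairwise disjoint interiors, i.e.
   centers at pairwise distance >= 2. *)
Definition unit_ball_packing (c : list pt) : Prop :=
  NoDup c /\
  forall i j, (i < length c)%nat -> (j < length c)%nat -> i <> j ->
    2 <= dist3 (nth i c vzero) (nth j c vzero).

Definition lattice_packing (b1 b2 b3 : pt) (c : list pt) : Prop :=
  unit_ball_packing c /\ Forall (in_lattice b1 b2 b3) c.

Definition touchb (p q : pt) : bool :=
  if Req_EM_T (dist3 p q) 2 then true else false.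

Fixpoint contact_number (c : list pt) : nat :=
  match c with
  | [] => 0
  | p :: t => (length (filter (touchb p) t) + contact_number t)%nat
  end.

(* Main.v *)
Require Import Defs.
From Stdlib Require Import Reals List.
Open Scope R_scope.
Open Scope nat_scope.
From Stdlib Require Import List Permutation Lia Arith ZArith.
From Stdlib Require FinFun.
Import ListNotations.

Fixpoint pc {A} (r : A -> A -> bool) (l : list A) : nat :=
  match l with
  | [] => 0
  | p :: t => length (filter (r p) t) + pc r t
  end.

Lemma filter_len_perm {A} (f : A -> bool) l l' :
  Permutation l l' -> length (filter f l) = length (filter f l').
Proof.
  induction 1; simpl; auto.
  - destruct (f x); simpl; auto.
  - destruct (f x), (f y); simpl; auto.
  - congruence.
Qed.

Lemma pc_perm {A} (r : A -> A -> bool) (Hs : forall x y, r x y = r y x) l l' :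
  Permutation l l' -> pc r l = pc r l'.
Proof.
  induction 1; simpl; auto.
  - rewrite (filter_len_perm _ _ _ H). lia.
  - rewrite (Hs x y). destruct (r y x); simpl; lia.
  - congruence.
Qed.

Lemma pc_ext {A} (r r' : A -> A -> bool) l :
  (forall x y, r x y = r' x y) -> pc r l = pc r' l.
Proof.
  intros H; induction l; simpl; auto.
  rewrite IHl. f_equal. f_equal. apply filter_ext. auto.
Qed.

Lemma pc_zero {A} (r : A -> A -> bool) l :
  (forall x y, r x y = false) -> pc r l = 0.
Proof.
  intros H; induction l; simpl; auto.
  rewrite IHl. assert (filter (r a) l = []).
  { clear IHl. induction l; simpl; auto. rewrite H. auto. }
  rewrite H0; auto.
Qed.

Lemma pc_pos {A} (r : A -> A -> bool) l :
  (0 < pc r l)%nat -> exists x y, In x l /\ In y l /\ r x y = true.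
Proof.
  induction l; simpl; intros H; [lia|].
  destruct (length (filter (r a) l)) eqn:E.
  - destruct (IHl ltac:(lia)) as (x&y&?&?&?). exists x, y; auto.
  - destruct (filter (r a) l) as [|y m] eqn:F; [simpl in E; discriminate|].
    assert (In y (filter (r a) l)) by (rewrite F; left; auto).
    apply filter_In in H0. exists a, y; intuition.
Qed.


Definition card {A U} (Ud : forall x y : U, {x = y} + {x <> y}) (f : A -> U) (l : list A) : nat :=
  length (nodup Ud (map f l)).

Lemma nd_len {U} (a b : list U) :
  NoDup a -> NoDup b -> (forall x, In x a <-> In x b) -> length a = length b.
Proof.
  intros Ha Hb H. apply Nat.le_antisymm; apply NoDup_incl_length; auto;
  intros x; apply H.
Qed.

Lemma card_mem {A U} Ud (f : A -> U) l l' :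
  (forall x, In x l <-> In x l') -> card Ud f l = card Ud f l'.
Proof.
  intros H. unfold card. apply nd_len; try apply NoDup_nodup.
  intros u. rewrite !nodup_In, !in_map_iff. split; intros [x [? Hx]]; exists x; split; auto; apply H; auto.
Qed.

Lemma card_incl {A U} Ud (f : A -> U) l l' :
  incl l l' -> card Ud f l <= card Ud f l'.
Proof.
  intros H. unfold card. apply NoDup_incl_length; try apply NoDup_nodup.
  intros u. rewrite !nodup_In, !in_map_iff. intros [x [? Hx]]; exists x; split; auto.
Qed.

Lemma card_le_len {A U} Ud (f : A -> U) l : card Ud f l <= length l.
Proof.
  unfold card. rewrite <- (length_map f l). apply NoDup_incl_length; try apply NoDup_nodup.
  intros u; rewrite nodup_In; auto.
Qed.

Lemma card_inj {A U} Ud (f : A -> U) l :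
  NoDup l -> (forall x y, In x l -> In y l -> f x = f y -> x = y) -> card Ud f l = length l.
Proof.
  intros Hl Hi. unfold card. rewrite nodup_fixed_point.
  - apply length_map.
  - apply FinFun.Injective_map_NoDup_in; auto.
Qed.

Lemma card_cons {A U} Ud (f : A -> U) p l :
  card Ud f (p :: l) = if in_dec Ud (f p) (map f l) then card Ud f l else S (card Ud f l).
Proof.
  unfold card. simpl. destruct (in_dec Ud (f p) (map f l)); simpl; auto.
Qed.

Lemma card_app_disj {A U} Ud (f : A -> U) l l' :
  (forall x y, In x l -> In y l' -> f x <> f y) ->
  card Ud f (l ++ l') = card Ud f l + card Ud f l'.
Proof.
  intros H. unfold card. rewrite <- length_app. apply nd_len.
  - apply NoDup_nodup.
  - apply NoDup_app; try apply NoDup_nodup.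
    intros u Hu Hu'. rewrite nodup_In, in_map_iff in Hu, Hu'.
    destruct Hu as [x [<- Hx]]; destruct Hu' as [y [Hy Hy']].
    apply (H x y); auto.
  - intros u. rewrite in_app_iff, !nodup_In, map_app, in_app_iff. tauto.
Qed.

Lemma card_pair {A U V} Ud Vd (f : A -> U) (g : A -> V) l :
  NoDup l -> (forall x y, In x l -> In y l -> f x = f y -> g x = g y -> x = y) ->
  length l <= card Ud f l * card Vd g l.
Proof.
  intros Hl Hi. unfold card. rewrite <- length_prod.
  rewrite <- (length_map (fun x => (f x, g x)) l).
  apply NoDup_incl_length.
  - apply FinFun.Injective_map_NoDup_in; auto.
    intros x y Hx Hy E. injection E; intros; auto.
  - intros [u v] Huv. rewrite in_map_iff in Huv. destruct Huv as [x [E Hx]].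
    injection E; intros <- <-. apply in_prod_iff. rewrite !nodup_In.
    split; apply in_map; auto.
Qed.

Lemma exists_max {A} (h : A -> Z) l : l <> [] ->
  exists p, In p l /\ forall q, In q l -> (h q <= h p)%Z.
Proof.
  induction l as [|a l IH]; intros H; [congruence|].
  destruct l as [|b l'].
  - exists a; split; [left; auto|]. intros q [<-|[]]; lia.
  - destruct (IH ltac:(discriminate)) as [p [Hp Hq]].
    destruct (Z_le_gt_dec (h a) (h p)).
    + exists p; split; [right; auto|]. intros q [<-|Hq']; auto; lia.
    + exists a; split; [left; auto|]. intros q [<-|Hq']; [lia|].
      specialize (Hq q Hq'); lia.
Qed.

Lemma nodup_all_eq {A} (m : list A) a : NoDup m -> (forall y, In y m -> y = a) -> length m <= 1.
Proof.
  intros Hn H. destruct m as [|x [|y m]]; simpl; auto.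
  exfalso. inversion Hn as [|x0 m0 Hx Hn']; subst. apply Hx. left.
  rewrite (H x (or_introl eq_refl)), (H y (or_intror (or_introl eq_refl))). auto.
Qed.
From Stdlib Require Import List Permutation Lia Arith ZArith.
Import ListNotations.

Lemma line_bound {A U} Ud (r : A -> A -> bool) (Hs : forall x y, r x y = r y x)
  (f : A -> U) (h : A -> Z) (nxt prv : A -> A)
  (Hr : forall x y, r x y = true -> y = nxt x \/ y = prv x)
  (Hh : forall x, (h x < h (nxt x))%Z)
  (Hf : forall x, f (prv x) = f x) :
  forall l, NoDup l -> pc r l + card Ud f l <= length l.
Proof.
  assert (forall k l, length l <= k -> NoDup l -> pc r l + card Ud f l <= length l).
  2:{ intros l; apply (H (length l)); auto. }
  induction k as [|k IH]; intros l Hlen Hnd.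
  { destruct l; simpl in *; [unfold card; simpl; lia | lia]. }
  destruct l as [|a l0]. { unfold card; simpl; lia. }
  destruct (exists_max h (a :: l0) ltac:(discriminate)) as [p [Hp Hmax]].
  destruct (in_split _ _ Hp) as [l1 [l2 E]].
  set (l' := l1 ++ l2).
  assert (HP : Permutation (a :: l0) (p :: l')) by (rewrite E; symmetry; apply Permutation_middle).
  rewrite (pc_perm r Hs _ _ HP).
  rewrite (card_mem Ud f (a :: l0) (p :: l')) by (intros x; split; apply Permutation_in; auto; symmetry; auto).
  rewrite (Permutation_length HP).
  assert (Hnd' : NoDup (p :: l')) by (eapply Permutation_NoDup; eauto).
  inversion Hnd' as [|x0 m0 Hpn Hnd2]; subst x0 m0.
  assert (Hl' : length l' <= k) by (rewrite (Permutation_length HP) in Hlen; simpl in Hlen; lia).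
  specialize (IH l' Hl' Hnd2).
  simpl pc. rewrite card_cons.
  assert (Hfil : forall y, In y (filter (r p) l') -> y = prv p).
  { intros y Hy. apply filter_In in Hy. destruct Hy as [Hy Hry].
    destruct (Hr _ _ Hry) as [E0|E0]; subst y; auto.
    exfalso. assert (In (nxt p) (a :: l0)).
    { apply Permutation_in with (p :: l'). symmetry; auto. right; auto. }
    specialize (Hmax _ H). specialize (Hh p). lia. }
  assert (Hle1 := nodup_all_eq _ _ (NoDup_filter (r p) Hnd2) Hfil).
  destruct (in_dec Ud (f p) (map f l')).
  - simpl. lia.
  - destruct (filter (r p) l') as [|y m] eqn:F.
    + simpl. lia.
    + exfalso. apply n. rewrite <- Hf. apply in_map.
      assert (Hy : In y (filter (r p) l')) by (rewrite F; left; auto).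
      assert (Ey : y = prv p) by (apply Hfil; left; auto).
      rewrite <- Ey. apply filter_In in Hy. tauto.
Qed.
From Stdlib Require Import List Permutation Lia Arith ZArith Reals Lra Psatz.
Import ListNotations.
Open Scope R_scope.

Lemma real_aux x M a b : 0 <= x -> x <= M -> x <= a * b -> 0 <= a -> 0 <= b ->
  2 * x <= sqrt M * (a + b).
Proof.
  intros Hx HM Hab Ha Hb.
  assert (HM0 : 0 <= M) by lra.
  assert (Hs := sqrt_sqrt M HM0). assert (Hs0 := sqrt_pos M).
  set (s := sqrt M) in *.
  assert (0 <= a*b) by nra.
  assert (x * x <= s * s * (a * b)).
  { rewrite Hs. apply Rle_trans with (x * (a*b)). apply Rmult_le_compat_l; auto. apply Rmult_le_compat_r; auto. }
  assert (4 * (a*b) <= (a+b)*(a+b)) by (assert (Hq:= Rle_0_sqr (a-b)); unfold Rsqr in Hq; lra).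
  assert ((2*x)*(2*x) <= (s*(a+b))*(s*(a+b))).
  { assert (0 <= s*s) by nra.
    apply Rle_trans with (4 * (s*s*(a*b))). lra.
    replace ((s*(a+b))*(s*(a+b))) with ((s*s)*((a+b)*(a+b))) by ring.
    replace (4 * (s*s*(a*b))) with ((s*s)*(4*(a*b))) by ring.
    apply Rmult_le_compat_l; auto. }
  destruct (Rle_or_lt (2*x) (s*(a+b))) as [|Hlt]; auto.
  assert (0 <= s*(a+b)) by nra. nra.
Qed.

Definition selk {A K} (Kd : forall x y : K, {x = y} + {x <> y}) (key : A -> K) (k : K) (y : A) : bool :=
  if Kd (key y) k then true else false.

Lemma lw_aux {A K U1 U2} (Kd : forall x y : K, {x = y} + {x <> y}) U1d U2d
  (key : A -> K) (p1 : A -> U1) (p2 : A -> U2)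
  (H1 : forall x y, p1 x = p1 y -> key x = key y)
  (H2 : forall x y, p2 x = p2 y -> key x = key y)
  (H12 : forall x y, p1 x = p1 y -> p2 x = p2 y -> x = y) (M : nat) :
  forall l, NoDup l -> (forall x, In x l -> (length (filter (selk Kd key (key x)) l) <= M)%nat) ->
  2 * INR (length l) <= sqrt (INR M) * INR (card U1d p1 l + card U2d p2 l).
Proof.
  assert (forall n l, (length l <= n)%nat -> NoDup l -> (forall x, In x l -> (length (filter (selk Kd key (key x)) l) <= M)%nat) ->
  2 * INR (length l) <= sqrt (INR M) * INR (card U1d p1 l + card U2d p2 l)).
  2:{ intros l; apply (H (length l)); auto. }
  induction n as [|n IH]; intros l Hlen Hnd Hsl.
  { destruct l; simpl in Hlen; [|lia]. simpl. unfold card; simpl. 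
    assert (0 <= sqrt (INR M)) by apply sqrt_pos. nra. }
  destruct l as [|a l0].
  { simpl. unfold card; simpl. assert (0 <= sqrt (INR M)) by apply sqrt_pos. nra. }
  set (l := a :: l0) in *.
  set (sel := selk Kd key (key a)).
  set (AA := filter sel l). set (RR := filter (fun y => negb (sel y)) l).
  assert (Hlen2 : length l = (length AA + length RR)%nat) by (symmetry; apply filter_length).
  assert (Hmem : forall x, In x l <-> In x (AA ++ RR)).
  { intros x. rewrite in_app_iff. unfold AA, RR. rewrite !filter_In.
    destruct (sel x); simpl; intuition. }
  assert (Hdisj : forall x y, In x AA -> In y RR -> key x <> key y).
  { intros x y Hx Hy. unfold AA, RR in *. rewrite filter_In in Hx, Hy.
    destruct Hx as [_ Hx]; destruct Hy as [_ Hy]. unfold sel, selk in *.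
    destruct (Kd (key x) (key a)); destruct (Kd (key y) (key a)); simpl in *; try discriminate.
    congruence. }
  rewrite (card_mem U1d p1 l (AA ++ RR) Hmem), (card_mem U2d p2 l (AA ++ RR) Hmem).
  rewrite !card_app_disj by (intros x y Hx Hy E; apply (Hdisj x y Hx Hy); auto).
  assert (HaA : In a AA).
  { unfold AA. apply filter_In. split. left; auto. unfold sel, selk. destruct (Kd (key a) (key a)); auto. }
  assert (HA1 : (1 <= length AA)%nat) by (destruct AA; simpl in *; [contradiction|lia]).
  assert (HRn : (length RR <= n)%nat) by lia.
  assert (HndR : NoDup RR) by (apply NoDup_filter; auto).
  assert (HndA : NoDup AA) by (apply NoDup_filter; auto).
  assert (IHR := IH RR HRn HndR).
  assert (IHR' : 2 * INR (length RR) <= sqrt (INR M) * INR (card U1d p1 RR + card U2d p2 RR)).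
  { apply IHR. intros x Hx. eapply Nat.le_trans; [|apply (Hsl x)].
    - apply NoDup_incl_length. apply NoDup_filter; auto.
      intros y Hy. rewrite filter_In in Hy |- *. destruct Hy as [Hy Hy'].
      split; auto. unfold RR in Hy. apply filter_In in Hy. tauto.
    - unfold RR in Hx. apply filter_In in Hx. tauto. }
  assert (HAM : (length AA <= M)%nat) by (apply (Hsl a); left; auto).
  assert (HAp : (length AA <= card U1d p1 AA * card U2d p2 AA)%nat).
  { apply card_pair; auto. }
  assert (HAr : 2 * INR (length AA) <= sqrt (INR M) * (INR (card U1d p1 AA) + INR (card U2d p2 AA))).
  { apply real_aux; try apply pos_INR. apply le_INR; auto.
    rewrite <- mult_INR. apply le_INR; auto. }
  rewrite Hlen2. rewrite !plus_INR in *. nra.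
Qed.

Lemma lw {A K U1 U2 U3} (Kd : forall x y : K, {x = y} + {x <> y}) U1d U2d U3d
  (key : A -> K) (p1 : A -> U1) (p2 : A -> U2) (p3 : A -> U3)
  (H1 : forall x y, p1 x = p1 y -> key x = key y)
  (H2 : forall x y, p2 x = p2 y -> key x = key y)
  (H12 : forall x y, p1 x = p1 y -> p2 x = p2 y -> x = y)
  (H3 : forall x y, key x = key y -> p3 x = p3 y -> x = y) l :
  NoDup l ->
  4 * INR (length l) ^ 2 <= INR (card U3d p3 l) * INR (card U1d p1 l + card U2d p2 l) ^ 2.
Proof.
  intros Hnd.
  assert (H := lw_aux Kd U1d U2d key p1 p2 H1 H2 H12 (card U3d p3 l) l Hnd).
  assert (Hb : 2 * INR (length l) <= sqrt (INR (card U3d p3 l)) * INR (card U1d p1 l + card U2d p2 l)).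
  { apply H. intros x Hx. 
    set (S := filter (selk Kd key (key x)) l).
    assert (HS : NoDup S) by (apply NoDup_filter; auto).
    rewrite <- (card_inj U3d p3 S HS).
    - apply card_incl. intros y Hy. unfold S in Hy. apply filter_In in Hy. tauto.
    - intros y z Hy Hz E. apply H3; auto. unfold S in Hy, Hz. apply filter_In in Hy, Hz.
      unfold selk in Hy, Hz. destruct Hy as [_ Hy]; destruct Hz as [_ Hz].
      destruct (Kd (key y) (key x)), (Kd (key z) (key x)); try discriminate.
      congruence. }
  assert (Hs := sqrt_sqrt (INR (card U3d p3 l)) (pos_INR _)).
  assert (0 <= INR (length l)) by apply pos_INR.
  set (s := sqrt (INR (card U3d p3 l))) in *. rewrite <- Hs.
  set (t := INR (card U1d p1 l + card U2d p2 l)) in *.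
  nra.
Qed.
From Stdlib Require Import Reals List Lra Lia Psatz ZArith.
Open Scope R_scope.

Definition Z3 := (Z * Z * Z)%type.
Definition zadd (u v : Z3) : Z3 :=
  let '(a1, a2, a3) := u in let '(cl1, cl2, cl3) := v in (a1 + cl1, a2 + cl2, a3 + cl3)%Z.
Definition zscal (k : Z) (u : Z3) : Z3 :=
  let '(a1, a2, a3) := u in (k * a1, k * a2, k * a3)%Z.
Definition zopp (u : Z3) : Z3 := let '(a1, a2, a3) := u in (- a1, - a2, - a3)%Z.
Definition zsub (u v : Z3) : Z3 := zadd u (zopp v).
Definition z0 : Z3 := (0, 0, 0)%Z.
Definition zdot (u v : Z3) : Z :=
  let '(a1, a2, a3) := u in let '(cl1, cl2, cl3) := v in (a1 * cl1 + a2 * cl2 + a3 * cl3)%Z.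
Definition zcross (u v : Z3) : Z3 :=
  let '(a1, a2, a3) := u in let '(cl1, cl2, cl3) := v in
  (a2 * cl3 - a3 * cl2, a3 * cl1 - a1 * cl3, a1 * cl2 - a2 * cl1)%Z.

Definition Z3dec : forall x y : Z3, {x = y} + {x <> y}.
Proof. decide equality; try apply Z.eq_dec. decide equality; apply Z.eq_dec. Defined.
Definition Z2dec : forall x y : (Z * Z)%type, {x = y} + {x <> y}.
Proof. decide equality; apply Z.eq_dec. Defined.

Definition emb (b1 b2 b3 : pt) (z : Z3) : pt :=
  let '(k1, k2, k3) := z in
  vadd (vadd (vscale (IZR k1) b1) (vscale (IZR k2) b2)) (vscale (IZR k3) b3).
Definition dotp (u v : pt) : R :=
  let '(a1, a2, a3) := u in let '(cl1, cl2, cl3) := v in a1 * cl1 + a2 * cl2 + a3 * cl3.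
Definition Qr b1 b2 b3 z := dotp (emb b1 b2 b3 z) (emb b1 b2 b3 z).
Definition Br b1 b2 b3 u v := dotp (emb b1 b2 b3 u) (emb b1 b2 b3 v).

Ltac qexp b1 b2 b3 :=
  destruct b1 as [[? ?] ?], b2 as [[? ?] ?], b3 as [[? ?] ?];
  cbv beta iota delta [Qr Br emb dotp zadd zsub zopp zscal vadd vscale];
  rewrite ?plus_IZR, ?opp_IZR, ?mult_IZR, ?minus_IZR; ring.

Lemma Qr_sub_sym b1 b2 b3 x y : Qr b1 b2 b3 (zsub x y) = Qr b1 b2 b3 (zsub y x).
Proof. destruct x as [[? ?] ?], y as [[? ?] ?]. qexp b1 b2 b3. Qed.

Lemma Qr_opp b1 b2 b3 x : Qr b1 b2 b3 (zopp x) = Qr b1 b2 b3 x.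
Proof. destruct x as [[? ?] ?]. qexp b1 b2 b3. Qed.

Lemma Qr_scal2 b1 b2 b3 x : Qr b1 b2 b3 (zscal 2 x) = 4 * Qr b1 b2 b3 x.
Proof. destruct x as [[? ?] ?]. qexp b1 b2 b3. Qed.

Lemma Qr_par b1 b2 b3 u v :
  Qr b1 b2 b3 (zadd u v) + Qr b1 b2 b3 (zsub u v) = 2 * Qr b1 b2 b3 u + 2 * Qr b1 b2 b3 v.
Proof. destruct u as [[? ?] ?], v as [[? ?] ?]. qexp b1 b2 b3. Qed.

Lemma Qr_fano b1 b2 b3 u v w :
  Qr b1 b2 b3 (zadd (zadd u v) w) + Qr b1 b2 b3 (zsub (zadd u v) w)
  + Qr b1 b2 b3 (zadd (zsub u v) w) + Qr b1 b2 b3 (zsub (zsub u v) w)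
  = 4 * (Qr b1 b2 b3 u + Qr b1 b2 b3 v + Qr b1 b2 b3 w).
Proof. destruct u as [[? ?] ?], v as [[? ?] ?], w as [[? ?] ?]. qexp b1 b2 b3. Qed.

Lemma Qr_lin2 b1 b2 b3 s t u v :
  Qr b1 b2 b3 (zadd (zscal s u) (zscal t v)) =
  IZR s * IZR s * Qr b1 b2 b3 u + IZR t * IZR t * Qr b1 b2 b3 v + 2 * IZR s * IZR t * Br b1 b2 b3 u v.
Proof. destruct u as [[? ?] ?], v as [[? ?] ?]. qexp b1 b2 b3. Qed.

Lemma Qr_lin3 b1 b2 b3 s t r u v w :
  Qr b1 b2 b3 (zadd (zadd (zscal s u) (zscal t v)) (zscal r w)) =
  IZR s * IZR s * Qr b1 b2 b3 u + IZR t * IZR t * Qr b1 b2 b3 v + IZR r * IZR r * Qr b1 b2 b3 w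
  + 2 * IZR s * IZR t * Br b1 b2 b3 u v + 2 * IZR s * IZR r * Br b1 b2 b3 u w
  + 2 * IZR t * IZR r * Br b1 b2 b3 v w.
Proof. destruct u as [[? ?] ?], v as [[? ?] ?], w as [[? ?] ?]. qexp b1 b2 b3. Qed.

Lemma Qr_nonneg b1 b2 b3 x : 0 <= Qr b1 b2 b3 x.
Proof.
  unfold Qr. destruct (emb b1 b2 b3 x) as [[a c] d]. simpl. nra.
Qed.

Lemma emb_sub b1 b2 b3 x y :
  vadd (emb b1 b2 b3 x) (vscale (-1) (emb b1 b2 b3 y)) = emb b1 b2 b3 (zsub x y).
Proof.
  destruct x as [[? ?] ?], y as [[? ?] ?].
  destruct b1 as [[? ?] ?], b2 as [[? ?] ?], b3 as [[? ?] ?].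
  cbv beta iota delta [emb zsub zadd zopp vadd vscale]. rewrite ?plus_IZR, ?opp_IZR.
  f_equal; [f_equal|]; ring.
Qed.

Lemma vnorm_Qr b1 b2 b3 x : vnorm (emb b1 b2 b3 x) = sqrt (Qr b1 b2 b3 x).
Proof.
  unfold Qr. destruct (emb b1 b2 b3 x) as [[a c] d]. simpl. f_equal. ring.
Qed.
From Stdlib Require Import Reals List Lra Lia Psatz ZArith.
Open Scope R_scope.

Definition cls (z : Z3) : bool * bool * bool :=
  let '(a, b, c) := z in (Z.odd a, Z.odd b, Z.odd c).
Definition bx (c d : bool * bool * bool) : bool * bool * bool :=
  let '(a1, a2, a3) := c in let '(e1, e2, e3) := d in (xorb a1 e1, xorb a2 e2, xorb a3 e3).
Definition c000 : bool * bool * bool := (false, false, false).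

Lemma cls_add u v : cls (zadd u v) = bx (cls u) (cls v).
Proof. destruct u as [[? ?] ?], v as [[? ?] ?]. cbv beta iota delta [cls zadd bx]. rewrite !Z.odd_add. auto. Qed.
Lemma cls_opp u : cls (zopp u) = cls u.
Proof. destruct u as [[? ?] ?]. cbv beta iota delta [cls zopp]. rewrite !Z.odd_opp. auto. Qed.
Lemma cls_sub u v : cls (zsub u v) = bx (cls u) (cls v).
Proof. unfold zsub. rewrite cls_add, cls_opp. auto. Qed.
Lemma bx_self c : bx c c = c000.
Proof. destruct c as [[[|] [|]] [|]]; reflexivity. Qed.

Lemma even_half z : cls z = c000 -> exists w, z = zscal 2 w.
Proof.
  destruct z as [[a b] c]. cbv beta iota delta [cls c000]. intros E. injection E; intros Hc Hb Ha.
  exists (Z.div2 a, Z.div2 b, Z.div2 c). cbv beta iota delta [zscal].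
  rewrite (Z.div2_odd a) at 1. rewrite (Z.div2_odd b) at 1. rewrite (Z.div2_odd c) at 1.
  rewrite Ha, Hb, Hc. simpl. f_equal; [f_equal|]; ring.
Qed.

Definition minp b1 b2 b3 := forall z, z <> z0 -> 4 <= Qr b1 b2 b3 z.

Lemma Qr_z0 b1 b2 b3 : Qr b1 b2 b3 z0 = 0.
Proof.
  unfold Qr, z0.
  destruct b1 as [[? ?] ?], b2 as [[? ?] ?], b3 as [[? ?] ?].
  cbv beta iota delta [emb dotp vadd vscale]. ring.
Qed.

Lemma cls0_cases b1 b2 b3 (Hm : minp b1 b2 b3) z :
  cls z = c000 -> z = z0 \/ 16 <= Qr b1 b2 b3 z.
Proof.
  intros H. destruct (even_half z H) as [w ->].
  destruct (Z3dec w z0) as [->|Hw].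
  - left. reflexivity.
  - right. rewrite Qr_scal2. specialize (Hm w Hw). lra.
Qed.

Lemma touch_cls b1 b2 b3 (Hm : minp b1 b2 b3) z :
  Qr b1 b2 b3 z = 4 -> cls z <> c000.
Proof.
  intros HQ Hc. destruct (cls0_cases b1 b2 b3 Hm z Hc) as [->|H].
  - rewrite Qr_z0 in HQ. lra.
  - lra.
Qed.

Lemma zsub_z0 u v : zsub u v = z0 -> v = u.
Proof.
  unfold z0. destruct u as [[? ?] ?], v as [[? ?] ?]. cbv beta iota delta [zsub zadd zopp].
  intros E. injection E; intros. f_equal; [f_equal|]; lia.
Qed.
Lemma zadd_z0 u v : zadd u v = z0 -> v = zopp u.
Proof.
  unfold z0. destruct u as [[? ?] ?], v as [[? ?] ?]. cbv beta iota delta [zopp zadd].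
  intros E. injection E; intros. f_equal; [f_equal|]; lia.
Qed.

Lemma uniq_min b1 b2 b3 (Hm : minp b1 b2 b3) u v :
  Qr b1 b2 b3 u = 4 -> Qr b1 b2 b3 v = 4 -> cls u = cls v -> v = u \/ v = zopp u.
Proof.
  intros Hu Hv Hc.
  assert (H1 : cls (zsub u v) = c000) by (rewrite cls_sub, Hc; apply bx_self).
  assert (H2 : cls (zadd u v) = c000) by (rewrite cls_add, Hc; apply bx_self).
  destruct (cls0_cases b1 b2 b3 Hm _ H1) as [E1|E1]; [left; apply zsub_z0; auto|].
  destruct (cls0_cases b1 b2 b3 Hm _ H2) as [E2|E2]; [right; apply zadd_z0; auto|].
  exfalso. assert (P := Qr_par b1 b2 b3 u v). lra.
Qed.

Lemma fano b1 b2 b3 (Hm : minp b1 b2 b3) u v w :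
  Qr b1 b2 b3 u = 4 -> Qr b1 b2 b3 v = 4 -> Qr b1 b2 b3 w = 4 ->
  bx (bx (cls u) (cls v)) (cls w) = c000 ->
  exists s t, (s = 1 \/ s = -1)%Z /\ (t = 1 \/ t = -1)%Z /\ w = zadd (zscal s u) (zscal t v).
Proof.
  intros Hu Hv Hw Hc.
  assert (C1 : cls (zadd (zadd u v) w) = c000) by (rewrite !cls_add; auto).
  assert (C2 : cls (zsub (zadd u v) w) = c000) by (rewrite cls_sub, cls_add; auto).
  assert (C3 : cls (zadd (zsub u v) w) = c000) by (rewrite cls_add, cls_sub; auto).
  assert (C4 : cls (zsub (zsub u v) w) = c000) by (rewrite !cls_sub; auto).
  destruct u as [[u1 u2] u3], v as [[v1 v2] v3], w as [[w1 w2] w3].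
  destruct (cls0_cases b1 b2 b3 Hm _ C1) as [E|E1].
  { exists (-1)%Z, (-1)%Z. split; [right; auto|]. split; [right; auto|].
    revert E. unfold z0. cbv beta iota delta [zsub zadd zopp zscal]. intros E; injection E; intros.
    f_equal; [f_equal|]; lia. }
  destruct (cls0_cases b1 b2 b3 Hm _ C2) as [E|E2].
  { exists 1%Z, 1%Z. split; [left; auto|]. split; [left; auto|].
    revert E. unfold z0. cbv beta iota delta [zsub zadd zopp zscal]. intros E; injection E; intros.
    f_equal; [f_equal|]; lia. }
  destruct (cls0_cases b1 b2 b3 Hm _ C3) as [E|E3].
  { exists (-1)%Z, 1%Z. split; [right; auto|]. split; [left; auto|].
    revert E. unfold z0. cbv beta iota delta [zsub zadd zopp zscal]. intros E; injection E; intros.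
    f_equal; [f_equal|]; lia. }
  destruct (cls0_cases b1 b2 b3 Hm _ C4) as [E|E4].
  { exists 1%Z, (-1)%Z. split; [left; auto|]. split; [right; auto|].
    revert E. unfold z0. cbv beta iota delta [zsub zadd zopp zscal]. intros E; injection E; intros.
    f_equal; [f_equal|]; lia. }
  exfalso. assert (F := Qr_fano b1 b2 b3 (u1,u2,u3) (v1,v2,v3) (w1,w2,w3)). lra.
Qed.

Lemma zlin_comp a s t b u v w :
  zadd (zscal a (zadd (zscal s u) (zscal t v))) (zscal b w) =
  zadd (zadd (zscal (a * s) u) (zscal (a * t) v)) (zscal b w).
Proof.
  destruct u as [[? ?] ?], v as [[? ?] ?], w as [[? ?] ?].
  cbv beta iota delta [zadd zscal]. f_equal; [f_equal|]; ring.
Qed.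

Lemma B_pm2 b1 b2 b3 (Hm : minp b1 b2 b3) u v w :
  Qr b1 b2 b3 u = 4 -> Qr b1 b2 b3 v = 4 -> Qr b1 b2 b3 w = 4 ->
  bx (bx (cls u) (cls v)) (cls w) = c000 ->
  Br b1 b2 b3 u v = 2 \/ Br b1 b2 b3 u v = -2.
Proof.
  intros Hu Hv Hw Hc.
  destruct (fano b1 b2 b3 Hm u v w Hu Hv Hw Hc) as (s & t & Hs & Ht & E).
  rewrite E, Qr_lin2, Hu, Hv in Hw.
  destruct Hs as [->| ->]; destruct Ht as [->| ->]; simpl in Hw; lra.
Qed.

Definition cl1 := (true, false, false).
Definition cl2 := (false, true, false).
Definition cl3 := (true, true, false).
Definition cl4 := (false, false, true).
Definition cl5 := (true, false, true).
Definition cl6 := (false, true, true).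
Definition cl7 := (true, true, true).

Lemma seven b1 b2 b3 (Hm : minp b1 b2 b3) d1 d2 d3 d4 d5 d6 d7 :
  Qr b1 b2 b3 d1 = 4 -> Qr b1 b2 b3 d2 = 4 -> Qr b1 b2 b3 d3 = 4 -> Qr b1 b2 b3 d4 = 4 ->
  Qr b1 b2 b3 d5 = 4 -> Qr b1 b2 b3 d6 = 4 -> Qr b1 b2 b3 d7 = 4 ->
  cls d1 = cl1 -> cls d2 = cl2 -> cls d3 = cl3 -> cls d4 = cl4 ->
  cls d5 = cl5 -> cls d6 = cl6 -> cls d7 = cl7 -> False.
Proof.
  intros Q1 Q2 Q3 Q4 Q5 Q6 Q7 K1 K2 K3 K4 K5 K6 K7.
  assert (B12 := B_pm2 b1 b2 b3 Hm d1 d2 d3 Q1 Q2 Q3 ltac:(rewrite K1, K2, K3; reflexivity)).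
  assert (B14 := B_pm2 b1 b2 b3 Hm d1 d4 d5 Q1 Q4 Q5 ltac:(rewrite K1, K4, K5; reflexivity)).
  assert (B24 := B_pm2 b1 b2 b3 Hm d2 d4 d6 Q2 Q4 Q6 ltac:(rewrite K2, K4, K6; reflexivity)).
  destruct (fano b1 b2 b3 Hm d1 d2 d3 Q1 Q2 Q3 ltac:(rewrite K1, K2, K3; reflexivity)) as (s & t & Hs & Ht & E3).
  destruct (fano b1 b2 b3 Hm d3 d4 d7 Q3 Q4 Q7 ltac:(rewrite K3, K4, K7; reflexivity)) as (s' & t' & Hs' & Ht' & E7).
  rewrite E7, E3, zlin_comp, Qr_lin3, Q1, Q2, Q4 in Q7.
  rewrite !mult_IZR in Q7.
  destruct Hs as [->| ->]; destruct Ht as [->| ->]; destruct Hs' as [->| ->]; destruct Ht' as [->| ->];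
  destruct B12 as [B12|B12]; rewrite B12 in Q7;
  destruct B14 as [B14|B14]; rewrite B14 in Q7;
  destruct B24 as [B24|B24]; rewrite B24 in Q7; simpl in Q7; lra.
Qed.
From Stdlib Require Import Reals List Lra Lia Psatz ZArith Bool.
Import ListNotations.
Open Scope R_scope.

Lemma lift_list b1 b2 b3 c : Forall (in_lattice b1 b2 b3) c ->
  exists zs, c = map (emb b1 b2 b3) zs.
Proof.
  induction 1 as [|p c Hp Hc IH].
  - exists []; auto.
  - destruct IH as [zs ->]. destruct Hp as (k1 & k2 & k3 & E).
    exists ((k1, k2, k3) :: zs). simpl. rewrite E. reflexivity.
Qed.

Lemma vsub_self (e : pt) : vadd e (vscale (-1) e) = vzero.
Proof. destruct e as [[? ?] ?]. unfold vadd, vscale, vzero. f_equal; [f_equal|]; ring. Qed.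

Lemma emb_zero b1 b2 b3 z : lin_indep3 b1 b2 b3 -> emb b1 b2 b3 z = vzero -> z = z0.
Proof.
  intros Hli E. destruct z as [[k1 k2] k3].
  destruct (Hli (IZR k1) (IZR k2) (IZR k3) E) as (E1 & E2 & E3).
  apply eq_IZR_R0 in E1, E2, E3. subst. reflexivity.
Qed.

Lemma emb_inj b1 b2 b3 x y : lin_indep3 b1 b2 b3 -> emb b1 b2 b3 x = emb b1 b2 b3 y -> x = y.
Proof.
  intros Hli E. symmetry. apply zsub_z0. apply (emb_zero b1 b2 b3); auto.
  rewrite <- emb_sub, E. apply vsub_self.
Qed.

Lemma get_minp b1 b2 b3 : lin_indep3 b1 b2 b3 -> min_norm_two b1 b2 b3 -> minp b1 b2 b3.
Proof.
  intros Hli [Hm _] z Hz.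
  assert (Hl : in_lattice b1 b2 b3 (emb b1 b2 b3 z)).
  { destruct z as [[k1 k2] k3]. exists k1, k2, k3. reflexivity. }
  assert (Hnz : emb b1 b2 b3 z <> vzero) by (intros E; apply Hz; apply (emb_zero b1 b2 b3); auto).
  specialize (Hm _ Hl Hnz). rewrite vnorm_Qr in Hm.
  assert (H0 := Qr_nonneg b1 b2 b3 z).
  assert (Hs := sqrt_sqrt _ H0). nra.
Qed.

Definition T b1 b2 b3 (x y : Z3) : bool := touchb (emb b1 b2 b3 x) (emb b1 b2 b3 y).

Lemma T_iff b1 b2 b3 x y : T b1 b2 b3 x y = true <-> Qr b1 b2 b3 (zsub x y) = 4.
Proof.
  unfold T, touchb, dist3. rewrite emb_sub, vnorm_Qr.
  assert (H0 := Qr_nonneg b1 b2 b3 (zsub x y)).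
  destruct (Req_EM_T _ 2) as [E|E]; split; intros H; auto; try discriminate.
  - assert (Hs := sqrt_sqrt _ H0). rewrite E in Hs. lra.
  - exfalso. apply E. rewrite H. replace 4 with (2*2) by ring. apply sqrt_square. lra.
Qed.

Lemma T_sym b1 b2 b3 x y : T b1 b2 b3 x y = T b1 b2 b3 y x.
Proof.
  destruct (T b1 b2 b3 x y) eqn:E1, (T b1 b2 b3 y x) eqn:E2; auto.
  - rewrite T_iff in E1. rewrite Qr_sub_sym in E1. rewrite <- T_iff in E1. congruence.
  - rewrite T_iff in E2. rewrite Qr_sub_sym in E2. rewrite <- T_iff in E2. congruence.
Qed.

Lemma filter_map_len {A B} (f : B -> bool) (g : A -> B) l :
  length (filter f (map g l)) = length (filter (fun x => f (g x)) l).
Proof. induction l; simpl; auto. destruct (f (g a)); simpl; auto. Qed.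

Lemma contact_pc b1 b2 b3 zs : contact_number (map (emb b1 b2 b3) zs) = pc (T b1 b2 b3) zs.
Proof.
  induction zs; simpl; auto. rewrite IHzs, filter_map_len. reflexivity.
Qed.

Definition b3dec : forall x y : bool * bool * bool, {x = y} + {x <> y}.
Proof. decide equality; try apply Bool.bool_dec. decide equality; apply Bool.bool_dec. Defined.
Definition beq3 (x y : bool * bool * bool) : bool := if b3dec x y then true else false.

Definition rc b1 b2 b3 (c : bool * bool * bool) (x y : Z3) : bool :=
  T b1 b2 b3 x y && beq3 (cls (zsub x y)) c.

Lemma bx_comm c d : bx c d = bx d c.
Proof. destruct c as [[[|] [|]] [|]], d as [[[|] [|]] [|]]; reflexivity. Qed.

Lemma rc_sym b1 b2 b3 c x y : rc b1 b2 b3 c x y = rc b1 b2 b3 c y x.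
Proof. unfold rc. rewrite T_sym, !cls_sub, bx_comm. auto. Qed.

Definition c0 := c000.
Lemma filter_split8 {A} (P : A -> bool) (g : A -> bool * bool * bool) l :
  length (filter P l) =
  (length (filter (fun y => P y && beq3 (g y) c000) l) +
   length (filter (fun y => P y && beq3 (g y) cl1) l) +
   length (filter (fun y => P y && beq3 (g y) cl2) l) +
   length (filter (fun y => P y && beq3 (g y) cl3) l) +
   length (filter (fun y => P y && beq3 (g y) cl4) l) +
   length (filter (fun y => P y && beq3 (g y) cl5) l) +
   length (filter (fun y => P y && beq3 (g y) cl6) l) +
   length (filter (fun y => P y && beq3 (g y) cl7) l))%nat.
Proof.
  induction l as [|a l IH]; simpl; auto.
  destruct (P a); simpl; [|exact IH].
  destruct (g a) as [[[|] [|]] [|]]; unfold beq3, c000, cl1, cl2, cl3, cl4, cl5, cl6, cl7 in *; simpl; rewrite IH; lia.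
Qed.

Lemma pc_split8 b1 b2 b3 l :
  pc (T b1 b2 b3) l =
  (pc (rc b1 b2 b3 c000) l + pc (rc b1 b2 b3 cl1) l + pc (rc b1 b2 b3 cl2) l + pc (rc b1 b2 b3 cl3) l +
   pc (rc b1 b2 b3 cl4) l + pc (rc b1 b2 b3 cl5) l + pc (rc b1 b2 b3 cl6) l + pc (rc b1 b2 b3 cl7) l)%nat.
Proof.
  induction l as [|a l IH]; simpl; auto.
  rewrite IH. rewrite (filter_split8 (T b1 b2 b3 a) (fun y => cls (zsub a y)) l).
  unfold rc. lia.
Qed.

Lemma pc_c000 b1 b2 b3 (Hm : minp b1 b2 b3) l : pc (rc b1 b2 b3 c000) l = 0%nat.
Proof.
  apply pc_zero. intros x y. unfold rc.
  destruct (T b1 b2 b3 x y) eqn:E; auto. simpl. rewrite T_iff in E.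
  unfold beq3. destruct (b3dec (cls (zsub x y)) c000); auto.
  exfalso. apply (touch_cls b1 b2 b3 Hm _ E); auto.
Qed.
From Stdlib Require Import Reals List Lra Lia Psatz ZArith Bool.
Import ListNotations.
Open Scope R_scope.

Lemma N_vec b1 b2 b3 c l : (0 < pc (rc b1 b2 b3 c) l)%nat ->
  exists d, Qr b1 b2 b3 d = 4 /\ cls d = c.
Proof.
  intros H. destruct (pc_pos _ _ H) as (x & y & _ & _ & E).
  unfold rc in E. apply andb_prop in E. destruct E as [E1 E2].
  exists (zsub x y). split. apply T_iff; auto.
  unfold beq3 in E2. destruct (b3dec (cls (zsub x y)) c); auto; discriminate.
Qed.

Lemma rc_shape b1 b2 b3 (Hm : minp b1 b2 b3) d c x y :
  Qr b1 b2 b3 d = 4 -> cls d = c -> rc b1 b2 b3 c x y = true -> y = zadd x d \/ y = zsub x d.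
Proof.
  intros Hd Hc E. unfold rc in E. apply andb_prop in E. destruct E as [E1 E2].
  apply T_iff in E1. unfold beq3 in E2. destruct (b3dec (cls (zsub x y)) c) as [e|]; [|discriminate].
  destruct (uniq_min b1 b2 b3 Hm d (zsub x y) Hd E1 ltac:(congruence)) as [F|F];
  destruct x as [[? ?] ?], y as [[? ?] ?], d as [[? ?] ?]; revert F;
  cbv beta iota delta [zsub zadd zopp]; intros F; injection F; intros.
  - right. f_equal; [f_equal|]; lia.
  - left. f_equal; [f_equal|]; lia.
Qed.

Lemma Qr_nz b1 b2 b3 d : Qr b1 b2 b3 d = 4 -> d <> z0.
Proof. intros H E. subst. rewrite Qr_z0 in H. lra. Qed.

Lemma zdot_pos d : d <> z0 -> (0 < zdot d d)%Z.
Proof.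
  unfold z0. destruct d as [[p q] r]. cbv beta iota delta [zdot]. intros H.
  destruct (Z.eq_dec p 0); destruct (Z.eq_dec q 0); destruct (Z.eq_dec r 0); subst; try (exfalso; auto; fail); nia.
Qed.

Lemma h_mono d x : d <> z0 -> (zdot x d < zdot (zadd x d) d)%Z.
Proof.
  intros H. assert (P := zdot_pos d H). revert P.
  destruct x as [[? ?] ?], d as [[? ?] ?]. cbv beta iota delta [zdot zadd]. lia.
Qed.

Definition unit_dec : forall x y : unit, {x = y} + {x <> y}.
Proof. intros [] []; left; auto. Defined.

Lemma N_le b1 b2 b3 (Hm : minp b1 b2 b3) c l : NoDup l -> (pc (rc b1 b2 b3 c) l <= length l)%nat.
Proof.
  intros Hnd. destruct (Nat.eq_0_gt_0_cases (pc (rc b1 b2 b3 c) l)) as [E|P]; [lia|].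
  destruct (N_vec b1 b2 b3 c l P) as (d & Hd & Hc).
  assert (H := line_bound unit_dec (rc b1 b2 b3 c) (rc_sym b1 b2 b3 c) (fun _ => tt)
    (fun z => zdot z d) (fun z => zadd z d) (fun z => zsub z d)
    (fun x y E => rc_shape b1 b2 b3 Hm d c x y Hd Hc E)
    (fun x => h_mono d x (Qr_nz b1 b2 b3 d Hd)) (fun x => eq_refl) l Hnd).
  lia.
Qed.

Definition bdet (a b c : bool * bool * bool) : bool :=
  let '(a1, a2, a3) := a in let '(e1, e2, e3) := b in let '(f1, f2, f3) := c in
  xorb (xorb (a1 && xorb (e2 && f3) (e3 && f2)) (a2 && xorb (e3 && f1) (e1 && f3)))
       (a3 && xorb (e1 && f2) (e2 && f1)).

Lemma odd_det u v w : Z.odd (zdot u (zcross v w)) = bdet (cls u) (cls v) (cls w).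
Proof.
  destruct u as [[? ?] ?], v as [[? ?] ?], w as [[? ?] ?].
  cbv beta iota delta [zdot zcross cls bdet]. rewrite ?Z.odd_add. rewrite ?Z.odd_mul. rewrite ?Z.odd_sub. rewrite ?Z.odd_mul. reflexivity.
Qed.

Lemma cramer da db dc z :
  zscal (zdot da (zcross db dc)) z =
  zadd (zadd (zscal (zdot z (zcross db dc)) da) (zscal (zdot z (zcross dc da)) db))
       (zscal (zdot z (zcross da db)) dc).
Proof.
  destruct da as [[? ?] ?], db as [[? ?] ?], dc as [[? ?] ?], z as [[? ?] ?].
  cbv beta iota delta [zdot zcross zscal zadd]. f_equal; [f_equal|]; ring.
Qed.

Lemma zscal_inj k x y : k <> 0%Z -> zscal k x = zscal k y -> x = y.
Proof.
  intros Hk. destruct x as [[? ?] ?], y as [[? ?] ?]. cbv beta iota delta [zscal].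
  intros E; injection E; intros E3 E2 E1.
  apply Z.mul_reg_l in E1, E2, E3; auto. subst; auto.
Qed.

Lemma winv u v x : zdot (zsub x u) (zcross v u) = zdot x (zcross v u).
Proof.
  destruct u as [[? ?] ?], v as [[? ?] ?], x as [[? ?] ?].
  cbv beta iota delta [zdot zcross zsub zadd zopp]. ring.
Qed.
Lemma winv' u v x : zdot (zsub x u) (zcross u v) = zdot x (zcross u v).
Proof.
  destruct u as [[? ?] ?], v as [[? ?] ?], x as [[? ?] ?].
  cbv beta iota delta [zdot zcross zsub zadd zopp]. ring.
Qed.

Lemma triple b1 b2 b3 (Hm : minp b1 b2 b3) a b c l :
  bdet a b c = true -> NoDup l ->
  (0 < pc (rc b1 b2 b3 a) l)%nat -> (0 < pc (rc b1 b2 b3 b) l)%nat -> (0 < pc (rc b1 b2 b3 c) l)%nat ->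
  exists ma mb mc : nat,
    (pc (rc b1 b2 b3 a) l + ma <= length l)%nat /\ (pc (rc b1 b2 b3 b) l + mb <= length l)%nat /\
    (pc (rc b1 b2 b3 c) l + mc <= length l)%nat /\
    4 * INR (length l) ^ 2 <= INR mc * INR (ma + mb) ^ 2.
Proof.
  intros Hbd Hnd Pa Pb Pc.
  destruct (N_vec b1 b2 b3 a l Pa) as (da & Hda & Hca).
  destruct (N_vec b1 b2 b3 b l Pb) as (db & Hdb & Hcb).
  destruct (N_vec b1 b2 b3 c l Pc) as (dc & Hdc & Hcc).
  set (det := zdot da (zcross db dc)).
  assert (Hdet : det <> 0%Z).
  { intros E. assert (O := odd_det da db dc). fold det in O. rewrite E, Hca, Hcb, Hcc, Hbd in O. discriminate. }
  set (w1 := fun z => zdot z (zcross db dc)).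
  set (w2 := fun z => zdot z (zcross dc da)).
  set (w3 := fun z => zdot z (zcross da db)).
  assert (Hinj : forall x y, w1 x = w1 y -> w2 x = w2 y -> w3 x = w3 y -> x = y).
  { intros x y E1 E2 E3. apply (zscal_inj det); auto. unfold det. rewrite (cramer da db dc x), (cramer da db dc y).
    unfold w1, w2, w3 in *. rewrite E1, E2, E3. reflexivity. }
  set (fa := fun z => (w2 z, w3 z)).
  set (fb := fun z => (w1 z, w3 z)).
  set (fc := fun z => (w1 z, w2 z)).
  assert (Ia : forall x, fa (zsub x da) = fa x).
  { intros x. unfold fa, w2, w3. rewrite winv, winv'. reflexivity. }
  assert (Ib : forall x, fb (zsub x db) = fb x).
  { intros x. unfold fb, w1, w3. rewrite winv, winv'. reflexivity. }
  assert (Ic : forall x, fc (zsub x dc) = fc x).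
  { intros x. unfold fc, w1, w2. rewrite winv, winv'. reflexivity. }
  assert (La := line_bound Z2dec (rc b1 b2 b3 a) (rc_sym b1 b2 b3 a) fa
    (fun z => zdot z da) (fun z => zadd z da) (fun z => zsub z da)
    (fun x y E => rc_shape b1 b2 b3 Hm da a x y Hda Hca E)
    (fun x => h_mono da x (Qr_nz b1 b2 b3 da Hda)) Ia l Hnd).
  assert (Lb := line_bound Z2dec (rc b1 b2 b3 b) (rc_sym b1 b2 b3 b) fb
    (fun z => zdot z db) (fun z => zadd z db) (fun z => zsub z db)
    (fun x y E => rc_shape b1 b2 b3 Hm db b x y Hdb Hcb E)
    (fun x => h_mono db x (Qr_nz b1 b2 b3 db Hdb)) Ib l Hnd).
  assert (Lc := line_bound Z2dec (rc b1 b2 b3 c) (rc_sym b1 b2 b3 c) fc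
    (fun z => zdot z dc) (fun z => zadd z dc) (fun z => zsub z dc)
    (fun x y E => rc_shape b1 b2 b3 Hm dc c x y Hdc Hcc E)
    (fun x => h_mono dc x (Qr_nz b1 b2 b3 dc Hdc)) Ic l Hnd).
  assert (K1 : forall x y, fa x = fa y -> w3 x = w3 y).
  { intros x y E. unfold fa in E. injection E; auto. }
  assert (K2 : forall x y, fb x = fb y -> w3 x = w3 y).
  { intros x y E. unfold fb in E. injection E; auto. }
  assert (K12 : forall x y, fa x = fa y -> fb x = fb y -> x = y).
  { intros x y E E'. unfold fa, fb in *. injection E; injection E'; intros. apply Hinj; auto. }
  assert (K3 : forall x y, w3 x = w3 y -> fc x = fc y -> x = y).
  { intros x y E E'. unfold fc in *. injection E'; intros. apply Hinj; auto. }
  assert (LW := lw Z.eq_dec Z2dec Z2dec Z2dec w3 fa fb fc K1 K2 K12 K3 l Hnd).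
  exists (card Z2dec fa l), (card Z2dec fb l), (card Z2dec fc l).
  repeat split; auto.
Qed.
From Stdlib Require Import Reals Lra Lia Arith.
Open Scope R_scope.

Lemma combi (n T B : R) (N1 N2 N3 N4 N5 N6 N7 : nat) :
  INR N1 <= n ->
  INR N2 <= n ->
  INR N3 <= n ->
  INR N4 <= n ->
  INR N5 <= n ->
  INR N6 <= n ->
  INR N7 <= n ->
  3*n < B ->
  5*n - 3*T < B ->
  6*n - 6*T < B ->
  ~ ((0 < N1)%nat /\ (0 < N2)%nat /\ (0 < N3)%nat /\ (0 < N4)%nat /\ (0 < N5)%nat /\ (0 < N6)%nat /\ (0 < N7)%nat) ->
  ((0 < N1)%nat -> (0 < N2)%nat -> (0 < N4)%nat -> INR N1 + INR N2 + INR N4 <= 3*n - 3*T) ->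
  ((0 < N1)%nat -> (0 < N2)%nat -> (0 < N5)%nat -> INR N1 + INR N2 + INR N5 <= 3*n - 3*T) ->
  ((0 < N1)%nat -> (0 < N2)%nat -> (0 < N6)%nat -> INR N1 + INR N2 + INR N6 <= 3*n - 3*T) ->
  ((0 < N1)%nat -> (0 < N2)%nat -> (0 < N7)%nat -> INR N1 + INR N2 + INR N7 <= 3*n - 3*T) ->
  ((0 < N1)%nat -> (0 < N3)%nat -> (0 < N4)%nat -> INR N1 + INR N3 + INR N4 <= 3*n - 3*T) ->
  ((0 < N1)%nat -> (0 < N3)%nat -> (0 < N5)%nat -> INR N1 + INR N3 + INR N5 <= 3*n - 3*T) ->
  ((0 < N1)%nat -> (0 < N3)%nat -> (0 < N6)%nat -> INR N1 + INR N3 + INR N6 <= 3*n - 3*T) ->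
  ((0 < N1)%nat -> (0 < N3)%nat -> (0 < N7)%nat -> INR N1 + INR N3 + INR N7 <= 3*n - 3*T) ->
  ((0 < N1)%nat -> (0 < N4)%nat -> (0 < N6)%nat -> INR N1 + INR N4 + INR N6 <= 3*n - 3*T) ->
  ((0 < N1)%nat -> (0 < N4)%nat -> (0 < N7)%nat -> INR N1 + INR N4 + INR N7 <= 3*n - 3*T) ->
  ((0 < N1)%nat -> (0 < N5)%nat -> (0 < N6)%nat -> INR N1 + INR N5 + INR N6 <= 3*n - 3*T) ->
  ((0 < N1)%nat -> (0 < N5)%nat -> (0 < N7)%nat -> INR N1 + INR N5 + INR N7 <= 3*n - 3*T) ->
  ((0 < N2)%nat -> (0 < N3)%nat -> (0 < N4)%nat -> INR N2 + INR N3 + INR N4 <= 3*n - 3*T) ->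
  ((0 < N2)%nat -> (0 < N3)%nat -> (0 < N5)%nat -> INR N2 + INR N3 + INR N5 <= 3*n - 3*T) ->
  ((0 < N2)%nat -> (0 < N3)%nat -> (0 < N6)%nat -> INR N2 + INR N3 + INR N6 <= 3*n - 3*T) ->
  ((0 < N2)%nat -> (0 < N3)%nat -> (0 < N7)%nat -> INR N2 + INR N3 + INR N7 <= 3*n - 3*T) ->
  ((0 < N2)%nat -> (0 < N4)%nat -> (0 < N5)%nat -> INR N2 + INR N4 + INR N5 <= 3*n - 3*T) ->
  ((0 < N2)%nat -> (0 < N4)%nat -> (0 < N7)%nat -> INR N2 + INR N4 + INR N7 <= 3*n - 3*T) ->
  ((0 < N2)%nat -> (0 < N5)%nat -> (0 < N6)%nat -> INR N2 + INR N5 + INR N6 <= 3*n - 3*T) ->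
  ((0 < N2)%nat -> (0 < N6)%nat -> (0 < N7)%nat -> INR N2 + INR N6 + INR N7 <= 3*n - 3*T) ->
  ((0 < N3)%nat -> (0 < N4)%nat -> (0 < N5)%nat -> INR N3 + INR N4 + INR N5 <= 3*n - 3*T) ->
  ((0 < N3)%nat -> (0 < N4)%nat -> (0 < N6)%nat -> INR N3 + INR N4 + INR N6 <= 3*n - 3*T) ->
  ((0 < N3)%nat -> (0 < N5)%nat -> (0 < N7)%nat -> INR N3 + INR N5 + INR N7 <= 3*n - 3*T) ->
  ((0 < N3)%nat -> (0 < N6)%nat -> (0 < N7)%nat -> INR N3 + INR N6 + INR N7 <= 3*n - 3*T) ->
  ((0 < N4)%nat -> (0 < N5)%nat -> (0 < N6)%nat -> INR N4 + INR N5 + INR N6 <= 3*n - 3*T) ->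
  ((0 < N4)%nat -> (0 < N5)%nat -> (0 < N7)%nat -> INR N4 + INR N5 + INR N7 <= 3*n - 3*T) ->
  ((0 < N4)%nat -> (0 < N6)%nat -> (0 < N7)%nat -> INR N4 + INR N6 + INR N7 <= 3*n - 3*T) ->
  ((0 < N5)%nat -> (0 < N6)%nat -> (0 < N7)%nat -> INR N5 + INR N6 + INR N7 <= 3*n - 3*T) ->
  INR (N1+N2+N3+N4+N5+N6+N7) < B.
Proof.
  intros U1 U2 U3 U4 U5 U6 U7 F1 F2 F3 Hall H0 H1 H2 H3 H4 H5 H6 H7 H8 H9 H10 H11 H12 H13 H14 H15 H16 H17 H18 H19 H20 H21 H22 H23 H24 H25 H26 H27.
  rewrite !plus_INR.
  assert (Z1 := pos_INR N1).
  assert (Z2 := pos_INR N2).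
  assert (Z3 := pos_INR N3).
  assert (Z4 := pos_INR N4).
  assert (Z5 := pos_INR N5).
  assert (Z6 := pos_INR N6).
  assert (Z7 := pos_INR N7).
  destruct (Nat.eq_0_gt_0_cases N1) as [E1|P1]; destruct (Nat.eq_0_gt_0_cases N2) as [E2|P2]; destruct (Nat.eq_0_gt_0_cases N3) as [E3|P3]; destruct (Nat.eq_0_gt_0_cases N4) as [E4|P4]; destruct (Nat.eq_0_gt_0_cases N5) as [E5|P5]; destruct (Nat.eq_0_gt_0_cases N6) as [E6|P6]; destruct (Nat.eq_0_gt_0_cases N7) as [E7|P7];
  [ .. | exfalso; apply Hall; repeat split; assumption ];
  repeat match goal with H : (0 < ?x)%nat -> _, P : (0 < ?x)%nat |- _ => specialize (H P) end;
  repeat match goal with E : ?x = 0%nat |- _ => rewrite E in * end; simpl INR in *; lra.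
Qed.
From Stdlib Require Import Reals Lra Psatz Machin.
Open Scope R_scope.
Lemma PI_gt_314 : 314/100 < PI.
Proof.
  destruct (PI_2_3_7_ineq 1) as [H _].
  unfold PI_2_3_7_tg, tg_alt, Ratan_seq in H. simpl in H.
  lra.
Qed.

Lemma cube_lt : forall a b, 0 <= a -> 0 <= b -> a^3 < b^3 -> a < b.
Proof.
  intros a b Ha Hb H. destruct (Rlt_or_le a b) as [|Hle]; auto.
  exfalso. assert (b^3 <= a^3) by (apply pow_incr; lra). lra.
Qed.

Lemma Rpower_cube : forall x, 0 < x -> (Rpower x (1/3))^3 = x.
Proof.
  intros x Hx. rewrite <- Rpower_pow by (apply exp_pos).
  rewrite Rpower_mult. replace (1/3 * INR 3) with 1 by (simpl; field).
  apply Rpower_1; auto.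
Qed.

Lemma final_num (n:nat) (C T : R) : (2 <= n)%nat -> T = Rpower (INR n) (2/3) ->
  (C <= 3*INR n \/ C <= 5*INR n - 3*T \/ C <= 6*INR n - 6*T) ->
  C < 6*INR n - 3*Rpower (18*PI)(1/3)/PI * T.
Proof.
  intros Hn HT HC.
  assert (Hnpos : 2 <= INR n) by (apply (le_INR 2); auto).
  assert (Hn0 : 0 < INR n) by lra.
  set (t := Rpower (INR n) (1/3)).
  assert (Ht3 : t^3 = INR n) by (apply Rpower_cube; auto).
  assert (Ht0 : 0 < t) by (unfold t; apply exp_pos).
  assert (HTt : T = t^2).
  { rewrite HT. unfold t. rewrite <- Rpower_pow by (apply exp_pos).
    rewrite Rpower_mult. f_equal. simpl. field. }
  assert (Hpi := PI_gt_314).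
  set (r := Rpower (18*PI)(1/3)).
  assert (Hr3 : r^3 = 18*PI) by (apply Rpower_cube; lra).
  assert (Hr0 : 0 < r) by (unfold r; apply exp_pos).
  assert (Hrt : r < PI * t).
  { apply cube_lt; try nra. rewrite Hr3. rewrite Rpow_mult_distr, Ht3.
    assert (9 < PI^2) by nra. assert (18 < PI^2 * INR n) by nra. nra. }
  assert (Hr4 : r < 4/3 * PI).
  { apply cube_lt; try nra. }
  set (c := 3 * r / PI).
  assert (Hc : c * PI = 3 * r) by (unfold c; field; lra).
  assert (Hc4 : c < 4) by nra.
  assert (Hct : c < 3 * t) by nra.
  assert (Ht1 : 1 < t) by (apply cube_lt; nra).
  replace (3 * r / PI) with c by reflexivity.
  rewrite HTt. rewrite <- Ht3 in HC |- *. rewrite HTt in HC.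
  assert (Hc0 : 0 < c) by nra.
  destruct HC as [H1|[H1|H1]]; nra.
Qed.
From Stdlib Require Import Reals List Lra Lia Psatz ZArith Bool.
Import ListNotations.
Open Scope R_scope.

Lemma T_cube x : 0 < x -> (Rpower x (2/3)) ^ 3 = x ^ 2.
Proof.
  intros Hx. rewrite <- Rpower_pow by (apply exp_pos).
  rewrite Rpower_mult. replace (2/3 * INR 3) with (INR 2) by (simpl; field).
  apply Rpower_pow; auto.
Qed.

Lemma cube_lt_aux a b : 0 <= a -> a < b -> a ^ 3 < b ^ 3.
Proof. intros Ha Hab. assert (0 < b) by lra.
  assert (E : b^3 - a^3 = (b-a)*(b*b+a*b+a*a)) by ring.
  assert (0 < b*b + a*b + a*a).
  { assert (0 < b*b) by (apply Rmult_lt_0_compat; lra).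
    assert (0 <= a*b) by (apply Rmult_le_pos; lra).
    assert (0 <= a*a) by (apply Rmult_le_pos; lra). lra. }
  assert (0 < (b-a)*(b*b+a*b+a*a)) by (apply Rmult_lt_0_compat; lra). lra. Qed.

Lemma lw_to_T (n ma mb mc : R) : 0 < n -> 0 <= ma -> 0 <= mb -> 0 <= mc ->
  4 * n ^ 2 <= mc * (ma + mb) ^ 2 -> 3 * Rpower n (2/3) <= ma + mb + mc.
Proof.
  intros Hn Ha Hb Hc H.
  assert (HT := T_cube n Hn). assert (HT0 : 0 < Rpower n (2/3)) by apply exp_pos.
  set (T := Rpower n (2/3)) in *.
  set (u := (ma + mb) / 2).
  assert (Hu : 0 <= u) by (unfold u; lra).
  assert (H1 : n ^ 2 <= mc * (u * u)) by (unfold u; nra).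
  assert (H2 : mc * (u * u) <= ((mc + 2 * u) / 3) ^ 3).
  { assert (((mc + 2 * u) / 3) ^ 3 - mc * (u * u) = (mc - u) ^ 2 * (mc + 8 * u) / 27) by (field).
    assert (0 <= (mc - u) ^ 2 * (mc + 8 * u) / 27).
    { apply Rmult_le_pos; [|lra]. apply Rmult_le_pos; [apply pow2_ge_0|lra]. }
    lra. }
  assert (Hs : mc + 2 * u = ma + mb + mc) by (unfold u; field).
  rewrite Hs in H2.
  destruct (Rle_or_lt T ((ma + mb + mc) / 3)) as [|Hlt]; [lra|].
  exfalso. assert (((ma + mb + mc) / 3) ^ 3 < T ^ 3).
  { assert (0 <= (ma + mb + mc) / 3) by lra. apply cube_lt_aux; auto. }
  lra.
Qed.

Lemma triple_R b1 b2 b3 (Hm : minp b1 b2 b3) a b c l :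
  bdet a b c = true -> NoDup l -> (0 < length l)%nat ->
  (0 < pc (rc b1 b2 b3 a) l)%nat -> (0 < pc (rc b1 b2 b3 b) l)%nat -> (0 < pc (rc b1 b2 b3 c) l)%nat ->
  INR (pc (rc b1 b2 b3 a) l) + INR (pc (rc b1 b2 b3 b) l) + INR (pc (rc b1 b2 b3 c) l)
   <= 3 * INR (length l) - 3 * Rpower (INR (length l)) (2/3).
Proof.
  intros Hbd Hnd Hl Pa Pb Pc.
  destruct (triple b1 b2 b3 Hm a b c l Hbd Hnd Pa Pb Pc) as (ma & mb & mc & Ha & Hb & Hc & HLW).
  assert (Hn : 0 < INR (length l)) by (apply lt_0_INR; auto).
  assert (X := lw_to_T (INR (length l)) (INR ma) (INR mb) (INR mc) Hn (pos_INR _) (pos_INR _) (pos_INR _)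
    ltac:(rewrite <- plus_INR; auto)).
  apply le_INR in Ha, Hb, Hc. rewrite plus_INR in Ha, Hb, Hc. lra.
Qed.

Theorem theorem1 (b1 b2 b3 : pt) (n : nat) :
  lin_indep3 b1 b2 b3 ->
  min_norm_two b1 b2 b3 ->
  (2 <= n)%nat ->
  forall c : list pt,
    length c = n ->
    lattice_packing b1 b2 b3 c ->
    INR (contact_number c) <
      6 * INR n - 3 * Rpower (18 * PI) (1 / 3) / PI * Rpower (INR n) (2 / 3).
Proof.
  intros Hli Hmn Hn c Hlen [[Hnd _] Hfor].
  assert (Hm := get_minp b1 b2 b3 Hli Hmn).
  destruct (lift_list b1 b2 b3 c Hfor) as [zs ->].
  apply NoDup_map_inv in Hnd. rewrite length_map in Hlen. subst n.
  rewrite contact_pc, pc_split8, pc_c000 by auto. simpl plus.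
  set (T := Rpower (INR (length zs)) (2/3)).
  assert (Hl : (0 < length zs)%nat) by lia.
  assert (F1 := final_num (length zs) (3 * INR (length zs)) T Hn eq_refl (or_introl (Rle_refl _))).
  assert (F2 := final_num (length zs) (5 * INR (length zs) - 3 * T) T Hn eq_refl (or_intror (or_introl (Rle_refl _)))).
  assert (F3 := final_num (length zs) (6 * INR (length zs) - 6 * T) T Hn eq_refl (or_intror (or_intror (Rle_refl _)))).
  assert (U1 : INR (pc (rc b1 b2 b3 cl1) zs) <= INR (length zs)) by (apply le_INR; apply N_le; auto).
  assert (U2 : INR (pc (rc b1 b2 b3 cl2) zs) <= INR (length zs)) by (apply le_INR; apply N_le; auto).
  assert (U3 : INR (pc (rc b1 b2 b3 cl3) zs) <= INR (length zs)) by (apply le_INR; apply N_le; auto).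
  assert (U4 : INR (pc (rc b1 b2 b3 cl4) zs) <= INR (length zs)) by (apply le_INR; apply N_le; auto).
  assert (U5 : INR (pc (rc b1 b2 b3 cl5) zs) <= INR (length zs)) by (apply le_INR; apply N_le; auto).
  assert (U6 : INR (pc (rc b1 b2 b3 cl6) zs) <= INR (length zs)) by (apply le_INR; apply N_le; auto).
  assert (U7 : INR (pc (rc b1 b2 b3 cl7) zs) <= INR (length zs)) by (apply le_INR; apply N_le; auto).
  assert (Hall : ~ ((0 < pc (rc b1 b2 b3 cl1) zs)%nat /\ (0 < pc (rc b1 b2 b3 cl2) zs)%nat /\ (0 < pc (rc b1 b2 b3 cl3) zs)%nat /\ (0 < pc (rc b1 b2 b3 cl4) zs)%nat /\ (0 < pc (rc b1 b2 b3 cl5) zs)%nat /\ (0 < pc (rc b1 b2 b3 cl6) zs)%nat /\ (0 < pc (rc b1 b2 b3 cl7) zs)%nat)).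
  { intros (P1 & P2 & P3 & P4 & P5 & P6 & P7).
    destruct (N_vec b1 b2 b3 cl1 zs P1) as (d1 & Q1 & K1).
    destruct (N_vec b1 b2 b3 cl2 zs P2) as (d2 & Q2 & K2).
    destruct (N_vec b1 b2 b3 cl3 zs P3) as (d3 & Q3 & K3).
    destruct (N_vec b1 b2 b3 cl4 zs P4) as (d4 & Q4 & K4).
    destruct (N_vec b1 b2 b3 cl5 zs P5) as (d5 & Q5 & K5).
    destruct (N_vec b1 b2 b3 cl6 zs P6) as (d6 & Q6 & K6).
    destruct (N_vec b1 b2 b3 cl7 zs P7) as (d7 & Q7 & K7).
    exact (seven b1 b2 b3 Hm d1 d2 d3 d4 d5 d6 d7 Q1 Q2 Q3 Q4 Q5 Q6 Q7 K1 K2 K3 K4 K5 K6 K7). }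
  assert (H0 := triple_R b1 b2 b3 Hm cl1 cl2 cl4 zs eq_refl Hnd Hl).
  assert (H1 := triple_R b1 b2 b3 Hm cl1 cl2 cl5 zs eq_refl Hnd Hl).
  assert (H2 := triple_R b1 b2 b3 Hm cl1 cl2 cl6 zs eq_refl Hnd Hl).
  assert (H3 := triple_R b1 b2 b3 Hm cl1 cl2 cl7 zs eq_refl Hnd Hl).
  assert (H4 := triple_R b1 b2 b3 Hm cl1 cl3 cl4 zs eq_refl Hnd Hl).
  assert (H5 := triple_R b1 b2 b3 Hm cl1 cl3 cl5 zs eq_refl Hnd Hl).
  assert (H6 := triple_R b1 b2 b3 Hm cl1 cl3 cl6 zs eq_refl Hnd Hl).
  assert (H7 := triple_R b1 b2 b3 Hm cl1 cl3 cl7 zs eq_refl Hnd Hl).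
  assert (H8 := triple_R b1 b2 b3 Hm cl1 cl4 cl6 zs eq_refl Hnd Hl).
  assert (H9 := triple_R b1 b2 b3 Hm cl1 cl4 cl7 zs eq_refl Hnd Hl).
  assert (H10 := triple_R b1 b2 b3 Hm cl1 cl5 cl6 zs eq_refl Hnd Hl).
  assert (H11 := triple_R b1 b2 b3 Hm cl1 cl5 cl7 zs eq_refl Hnd Hl).
  assert (H12 := triple_R b1 b2 b3 Hm cl2 cl3 cl4 zs eq_refl Hnd Hl).
  assert (H13 := triple_R b1 b2 b3 Hm cl2 cl3 cl5 zs eq_refl Hnd Hl).
  assert (H14 := triple_R b1 b2 b3 Hm cl2 cl3 cl6 zs eq_refl Hnd Hl).
  assert (H15 := triple_R b1 b2 b3 Hm cl2 cl3 cl7 zs eq_refl Hnd Hl).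
  assert (H16 := triple_R b1 b2 b3 Hm cl2 cl4 cl5 zs eq_refl Hnd Hl).
  assert (H17 := triple_R b1 b2 b3 Hm cl2 cl4 cl7 zs eq_refl Hnd Hl).
  assert (H18 := triple_R b1 b2 b3 Hm cl2 cl5 cl6 zs eq_refl Hnd Hl).
  assert (H19 := triple_R b1 b2 b3 Hm cl2 cl6 cl7 zs eq_refl Hnd Hl).
  assert (H20 := triple_R b1 b2 b3 Hm cl3 cl4 cl5 zs eq_refl Hnd Hl).
  assert (H21 := triple_R b1 b2 b3 Hm cl3 cl4 cl6 zs eq_refl Hnd Hl).
  assert (H22 := triple_R b1 b2 b3 Hm cl3 cl5 cl7 zs eq_refl Hnd Hl).
  assert (H23 := triple_R b1 b2 b3 Hm cl3 cl6 cl7 zs eq_refl Hnd Hl).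
  assert (H24 := triple_R b1 b2 b3 Hm cl4 cl5 cl6 zs eq_refl Hnd Hl).
  assert (H25 := triple_R b1 b2 b3 Hm cl4 cl5 cl7 zs eq_refl Hnd Hl).
  assert (H26 := triple_R b1 b2 b3 Hm cl4 cl6 cl7 zs eq_refl Hnd Hl).
  assert (H27 := triple_R b1 b2 b3 Hm cl5 cl6 cl7 zs eq_refl Hnd Hl).
  apply (combi (INR (length zs)) T _ _ _ _ _ _ _ _ U1 U2 U3 U4 U5 U6 U7 F1 F2 F3 Hall H0 H1 H2 H3 H4 H5 H6 H7 H8 H9 H10 H11 H12 H13 H14 H15 H16 H17 H18 H19 H20 H21 H22 H23 H24 H25 H26 H27).
Qed.
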